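(* Let $n,k$ be positive integers (with $k$ allowed to depend on $n$) and let $p\in[0,1]$. If $\mathbf{G}\sim\mathcal{G}(n,p,k)$, then asymptotically almost surely $\mathbf{G}$ is $s$-almost-complete for $$s=\max\bigl(2\sqrt{n}(1-p),\;9e^2\log(kn)\bigr).$$
   Context: A graph $G$ ''over $k$ blocks of size $n$'' has vertex set $V_1\sqcup\dots\sqcup V_k$ with $|V_i|=n$ for every $i$, where $n$ is a power of $2$ with $\log n$ even. Every vertex of a block $V_i$ is identified with a string in $\{0,1\}^{\log n}$, which is written as a pair $(x,y)\in\Sigma\times\Sigma$ with $\Sigma=\{0,1\}^{(\log n)/2}$ ($x$ the first half of the bits, $y$ the second half). $\mathcal{G}(n,p,k)$ is the distribution obtained by sampling a graph on the $kn$ vertices $V_1\sqcup\dots\sqcup V_k$ in which each pair of vertices lying in different blocks is an edge independently with probability $p$, and pairs inside a block are never edges (equivalently, an Erdős–Rényi graph $\mathcal{G}(nk,p)$ intersected with the complete $k$-partite graph with parts $V_1,\dots,V_k$). Given $s>0$, $G$ is $s$-almost-complete if for every $i\neq j\in[k]$ and every $x_i,y_i,x_j\in\Sigma$ there are at most $s$ values $y_j\in\Sigma$ such that the vertex $(x_i,y_i)$ of $V_i$ and the vertex $(x_j,y_j)$ of $V_j$ are not adjacent. ''Asymptotically almost surely'' means with probability $1-o(1)$ as $n\to\infty$. *)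

(* Defs.v *)
From HB Require Import structures.
From mathcomp Require Import all_boot all_order all_algebra.
From mathcomp Require Import all_classical all_reals all_analysis.
Set Implicit Arguments. Unset Strict Implicit. Unset Printing Implicit Defensive.
Import Order.TTheory GRing.Theory Num.Theory.
Local Open Scope ring_scope.

(* We index by m with n = 4^m = 2^(2m), so log2 n = 2m is even and
   Sigma = {0,1}^m is identified with 'I_(2^m). *)
Definition Sigma (m : nat) := 'I_(2 ^ m).
Definition vert (k m : nat) := ('I_k * (Sigma m * Sigma m))%type.

Definition blocksize (m : nat) : nat := (4 ^ m)%N.

(* Each unordered pair of vertices in different blocks is represented exactly
   once, as the ordered pair (u, v) with block(u) < block(v). *)
Definition cross_pairs (k m : nat) : {set vert k m * vert k m} :=
  [set uv | (val uv.1.1 < val uv.2.1)%N].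

(* A graph over k blocks of size n is a set E of cross pairs (its edges). *)
Definition adj (k m : nat) (E : {set vert k m * vert k m}) (u v : vert k m)
  : bool := ((u, v) \in E) || ((v, u) \in E).

Definition almost_complete (R : numDomainType) (k m : nat)
  (E : {set vert k m * vert k m}) (s : R) : bool :=
  [forall i : 'I_k, forall j : 'I_k, (i != j) ==>
    [forall xi : Sigma m, forall yi : Sigma m, forall xj : Sigma m,
      (#|[set yj : Sigma m | ~~ adj E (i, (xi, yi)) (j, (xj, yj))]|%:R <= s)]].

(* Probability, under G(n,p,k) with n = 4^m, that a graph satisfies A:
   each cross pair is an edge independently with probability p. *)
Definition Gnpk_prob (R : numDomainType) (k m : nat) (p : R)
  (A : pred {set vert k m * vert k m}) : R :=
  \sum_(E : {set vert k m * vert k m} | (E \subset cross_pairs k m) && A E)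
     p ^+ #|E| * (1 - p) ^+ (#|cross_pairs k m| - #|E|).

Definition log2 (R : realType) (x : R) : R := ln x / ln 2.

Definition s_bound (R : realType) (k m : nat) (p : R) : R :=
  Num.max (2 * Num.sqrt ((blocksize m)%:R) * (1 - p))
          (9 * expR 1 ^+ 2 * log2 ((k * blocksize m)%N%:R)).

(* Main.v *)
Require Import Defs.
From HB Require Import structures.
From mathcomp Require Import all_boot all_order all_algebra.
From mathcomp Require Import all_classical all_reals all_analysis.
From mathcomp Require Import lra ring.
Import Order.TTheory GRing.Theory Num.Theory numFieldNormedType.Exports.
Local Open Scope ring_scope.

Section Gen.
Variable R : realType.
Variable T : finType.
Variables (C : {set T}) (p : R).

Definition Wt (E : {set T}) : R :=
  \prod_c (if c \in E then (if c \in C then p else 0) else (if c \in C then 1 - p else 1)).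

Lemma Wt_eq (E : {set T}) : E \subset C -> Wt E = p ^+ #|E| * (1 - p) ^+ (#|C| - #|E|).
Proof.
move=> EC; rewrite /Wt (bigID (mem E)) /=.
rewrite (eq_bigr (fun _ => p)); last by move=> c cE; rewrite cE (fintype.subsetP EC).
rewrite prodr_const; congr (_ * _).
rewrite (bigID (mem C)) /= [X in _ * X]big1 ?mulr1; last by move=> c /andP[/negbTE-> /negbTE->].
rewrite (eq_bigr (fun _ => 1 - p)); last by move=> c /andP[/negbTE-> ->].
rewrite prodr_const; congr (_ ^+ _).
have -> : #|[pred c | ~~ (c \in E) & c \in C]| = #|C :\: E|.
  by apply: eq_card => c; rewrite !inE andbC.
by rewrite cardsD (finset.setIidPr EC).
Qed.

Lemma Wt_0 (E : {set T}) : ~~ (E \subset C) -> Wt E = 0.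
Proof.
case/subsetPn => c cE cC; rewrite /Wt (bigD1 c) //= cE (negbTE cC) mul0r //.
Qed.

Hypothesis hp : 0 <= p <= 1.

Lemma Wt_ge0 (E : {set T}) : 0 <= Wt E.
Proof.
case/andP: hp => p0 p1.
apply: prodr_ge0 => c _; case: (c \in E); case: (c \in C) => //; by rewrite subr_ge0.
Qed.

Lemma prob_Wt (A : pred {set T}) :
  \sum_(E : {set T} | (E \subset C) && A E) p ^+ #|E| * (1 - p) ^+ (#|C| - #|E|)
  = \sum_(E : {set T} | A E) Wt E.
Proof.
symmetry; rewrite (bigID (fun E : {set T} => E \subset C)) /= [X in _ + X]big1 ?addr0;
  last by move=> E /andP[_ /Wt_0].
apply: eq_big => [E|E /andP[_ EC]]; first by rewrite andbC.
by rewrite Wt_eq.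
Qed.

Lemma expect_prod (S : {set T}) (a : R) : S \subset C ->
  \sum_(E : {set T}) Wt E * \prod_(c in S) (if c \in E then 1 else a) = (p + (1 - p) * a) ^+ #|S|.
Proof.
move=> SC.
pose F c := if c \in C then p else 0.
pose G c := (if c \in C then 1 - p else 1) * (if c \in S then a else 1).
transitivity (\sum_(E : {set T}) \prod_c (if c \in E then F c else G c)).
  apply: eq_bigr => E _; rewrite /Wt [X in _ * X]big_mkcond /= -big_split /=.
  apply: eq_bigr => c _; rewrite /F /G.
  by case: (c \in E); case: (c \in S); rewrite ?mulr1.
rewrite -bigA_distr -prodr_const.
rewrite [RHS]big_mkcond /=; apply: eq_bigr => c _; rewrite /F /G.
case cS: (c \in S); first by rewrite (fintype.subsetP SC).
by case: (c \in C); rewrite ?mulr1 ?add0r // addrC subrK.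
Qed.

Lemma sumWt : \sum_(E : {set T}) Wt E = 1.
Proof.
have := @expect_prod finset.set0 1 (finset.sub0set C); rewrite cards0 expr0 => <-.
by apply: eq_bigr => E _; rewrite big_set0 mulr1.
Qed.

End Gen.
Arguments Wt {R T}.
Arguments expect_prod {R T C p}.
Arguments sumWt {R T C p}.
Arguments prob_Wt {R T C p}.
Arguments Wt_ge0 {R T C p}.

Section Graph.
Variable R : realType.
Variables (k m : nat) (p : R).
Hypothesis hp : 0 <= p <= 1.

Definition pr (i j : 'I_k) (xi yi xj : Sigma m) (yj : Sigma m) : vert k m * vert k m :=
  if (val i < val j)%N then ((i, (xi, yi)), (j, (xj, yj)))
  else ((j, (xj, yj)), (i, (xi, yi))).

Lemma pr_inj i j xi yi xj : injective (pr i j xi yi xj).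
Proof.
move=> y1 y2; rewrite /pr; case: ifP => _ [] //.
Qed.

Lemma pr_C i j xi yi xj yj : i != j -> pr i j xi yi xj yj \in cross_pairs k m.
Proof.
move=> ij; rewrite /pr /cross_pairs inE; case: ifP => //= /negbT.
rewrite -leqNgt leq_eqVlt => /orP[/eqP/val_inj ji|//].
by rewrite ji eqxx in ij.
Qed.

Lemma nonadj_pr (E : {set vert k m * vert k m}) i j xi yi xj yj :
  ~~ adj E (i, (xi, yi)) (j, (xj, yj)) -> pr i j xi yi xj yj \notin E.
Proof.
by rewrite /adj /pr negb_or => /andP[h1 h2]; case: ifP.
Qed.


Definition Xc (E : {set vert k m * vert k m}) (i j : 'I_k) (xi yi xj : Sigma m) : nat :=
  #|[set yj : Sigma m | ~~ adj E (i, (xi, yi)) (j, (xj, yj))]|.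

Lemma event_bound (i j : 'I_k) (xi yi xj : Sigma m) (s : R) : i != j ->
  2 * (2 ^ m)%:R * (1 - p) <= s ->
  \sum_(E : {set vert k m * vert k m}) Wt (cross_pairs k m) p E *
     (if s < (Xc E i j xi yi xj)%:R then 1 else 0)
  <= expR (- (s / 12)).
Proof.
move=> ij hs.
have [p0 p1] : 0 <= p /\ p <= 1 by case/andP: hp.
set a : R := expR (3^-1).
have a1 : 1 <= a by rewrite /a -expR0 ler_expR invr_ge0.
have a32 : a - 1 <= 2^-1.
  have h1 := expR_ge1Dx (- 3^-1 : R).
  rewrite expRN -/a in h1.
  have h2 : a * a^-1 = 1 by rewrite mulfV // gt_eqF // (lt_le_trans ltr01 a1).
  have h3 : (0 : R) < 3 by [].
  have h4 : (3 : R) * 3^-1 = 1 by rewrite mulfV.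
  nra.
set S := [set pr i j xi yi xj y | y in [set: Sigma m]].
have SC : S \subset cross_pairs k m.
  by apply/fintype.subsetP => c /imsetP[y _ ->]; exact: pr_C.
have cardS : #|S| = (2 ^ m)%N.
  by rewrite card_imset ?cardsT ?card_ord //; exact: pr_inj.
have e3 : 0 < expR (s / 3) by exact: expR_gt0.
have pw : forall E : {set vert k m * vert k m},
    (if s < (Xc E i j xi yi xj)%:R then 1 else 0) <=
    (\prod_(c in S) (if c \in E then 1 else a)) / expR (s / 3).
  move=> E.
  have hprod : 0 <= \prod_(c in S) (if c \in E then 1 else a).
    by apply: prodr_ge0 => c _; case: ifP => //; rewrite (le_trans ler01 a1).
  case: ifP => hX; last by rewrite divr_ge0 // ltW.
  rewrite ler_pdivlMr // mul1r.
  rewrite big_imset /=; last by move=> y1 y2 _ _; exact: pr_inj.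
  set Xs := [set yj : Sigma m | ~~ adj E (i, (xi, yi)) (j, (xj, yj))].
  apply: (le_trans (y := a ^+ #|Xs|)).
    rewrite /a -expRM_natl ler_expR ler_wpM2r ?invr_ge0 //.
    exact: ltW hX.
  have -> : a ^+ #|Xs| = \prod_(y in [set: Sigma m]) (if y \in Xs then a else 1).
    rewrite -prodr_const [RHS]big_mkcond [LHS]big_mkcond /=; apply: eq_bigr => y _.
    by rewrite finset.in_setT.
  apply: ler_prod => y _; case: ifP => hy.
    rewrite (le_trans ler01 a1) /=.
    move: hy; rewrite inE => /nonadj_pr /negbTE ->; by [].
  by rewrite ler01 /=; case: ifP.
apply: (le_trans (y := \sum_(E : {set vert k m * vert k m}) Wt (cross_pairs k m) p E *
   ((\prod_(c in S) (if c \in E then 1 else a)) / expR (s / 3)))).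
  by apply: ler_sum => E _; apply: ler_wpM2l; [exact: (Wt_ge0 hp) | exact: pw].
under eq_bigr => E _ do rewrite mulrA.
rewrite -mulr_suml expect_prod // cardS ler_pdivrMr // -expRD.
have -> : p + (1 - p) * a = 1 + (1 - p) * (a - 1) by ring.
apply: (le_trans (y := expR ((1 - p) * (a - 1)) ^+ (2 ^ m))).
  apply: lerXn2r; rewrite ?nnegrE ?expR_ge0 //.
    have : 0 <= (1 - p) * (a - 1) by apply: mulr_ge0; rewrite subr_ge0.
    lra.
  exact: expR_ge1Dx.
rewrite -expRM_natl ler_expR.
have hN : 0 <= (2 ^ m)%:R * (1 - p) :> R by apply: mulr_ge0; rewrite ?subr_ge0.
have h2 : 0 <= 2^-1 - (a - 1) :> R by rewrite subr_ge0.
have h22 : (2 : R) * 2^-1 = 1 by rewrite mulfV.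
nra.
Qed.


Definition Qt := ('I_k * 'I_k * Sigma m * Sigma m * Sigma m)%type.

Definition bind (s : R) (e : Qt) (E : {set vert k m * vert k m}) : R :=
  if e.1.1.1.1 != e.1.1.1.2 then
    (if s < (Xc E e.1.1.1.1 e.1.1.1.2 e.1.1.2 e.1.2 e.2)%:R then 1 else 0)
  else 0.

Lemma bad_bound (s : R) : 2 * (2 ^ m)%:R * (1 - p) <= s ->
  1 - @Gnpk_prob R k m p (fun E => @almost_complete R k m E s)
  <= (k * k * 2 ^ m * 2 ^ m * 2 ^ m)%N%:R * expR (- (s / 12)).
Proof.
move=> hs.
rewrite /Gnpk_prob prob_Wt -{1}(sumWt (C := cross_pairs k m) (p := p)).
rewrite [X in X - _](bigID (fun E : {set vert k m * vert k m} => @almost_complete R k m E s)) /= -addrA addrC subrK.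
apply: (le_trans (y := \sum_(E : {set vert k m * vert k m})
   Wt (cross_pairs k m) p E * \sum_(e : Qt) bind s e E)).
  rewrite big_mkcond /=; apply: ler_sum => E _.
  have hW := Wt_ge0 (C := cross_pairs k m) hp E.
  have hb : 0 <= \sum_(e : Qt) bind s e E.
    by apply: sumr_ge0 => e _; rewrite /bind; case: ifP => //; case: ifP.
  case: ifP => hbad; last by apply: mulr_ge0.
  rewrite -[X in X <= _]mulr1; apply: ler_wpM2l => //.
  move: hbad; rewrite /almost_complete => /forallPn [i] /forallPn [j].
  rewrite negb_imply => /andP[ij] /forallPn[xi] /forallPn[yi] /forallPn[xj] hX.
  rewrite (bigD1 (i, j, xi, yi, xj)) //= /bind /= ij /Xc.
  rewrite ltNge hX lerDl.
  by apply: sumr_ge0 => e _; case: ifP => //; case: ifP.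
rewrite (eq_bigr (fun E => \sum_(e : Qt) Wt (cross_pairs k m) p E * bind s e E));
  last by move=> E _; rewrite big_distrr.
rewrite exchange_big /=.
apply: (le_trans (y := \sum_(e : Qt) expR (- (s / 12)))).
  apply: ler_sum => e _; rewrite /bind.
  have [ij|ij] := boolP (e.1.1.1.1 != e.1.1.1.2).
    exact: event_bound.
  rewrite big1 ?expR_ge0 // => E _; exact: mulr0.
rewrite sumr_const -[X in X <= _]mulr_natl ler_pM2r ?expR_gt0 // ler_nat.
by rewrite /Qt !card_prod !card_ord.
Qed.

End Graph.

Lemma key_bound (R : realType) (K m : nat) (p : R) (hK : (0 < K)%N) (hp : 0 <= p <= 1) :
  1 - (2 ^ m)%:R^-1 <= @Gnpk_prob R K m p (fun E => @almost_complete R K m E (s_bound K m p)) <= 1.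
Proof.
apply/andP; split; last first.
  rewrite /Gnpk_prob prob_Wt.
  apply: (le_trans (y := \sum_(E : {set vert K m * vert K m}) Wt (cross_pairs K m) p E)).
    rewrite [X in _ <= X](bigID (fun E : {set vert K m * vert K m} => @almost_complete R K m E (s_bound K m p))) /=.
    rewrite lerDl; apply: sumr_ge0 => E _; exact: Wt_ge0.
  by rewrite sumWt.
set s := s_bound K m p.
set N := (2 ^ m)%N.
have hN : (0 < N)%N by rewrite expn_gt0.
have b4 : blocksize m = (N * N)%N by rewrite /blocksize /N -expnMn.
have hs1 : 2 * N%:R * (1 - p) <= s.
  rewrite /s /s_bound le_max; apply/orP; left.
  rewrite b4 natrM -expr2 sqrtr_sqr ger0_norm //.
set KR : R := ((K * blocksize m)%N)%:R.
have K1 : 1 <= KR by rewrite /KR ler1n b4 !muln_gt0 hK hN.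
have lnK0 : 0 <= ln KR := ln_ge0 K1.
have e2 : 2 <= expR 1 :> R by have := expR_ge1Dx (1 : R); lra.
have ln2pos : 0 < ln (2 : R) by apply: ln_gt0; lra.
have ln2le1 : ln (2 : R) <= 1.
  rewrite -[X in _ <= X](expRK (1 : R)) ler_ln // posrE ?expR_gt0 //; lra.
have hs2 : 36 * ln KR <= s.
  rewrite /s /s_bound le_max; apply/orP; right.
  rewrite -/KR /log2.
  have L1 : ln KR <= ln KR / ln 2.
    by rewrite ler_pdivlMr //; nra.
  have e4 : 4 <= expR 1 ^+ 2 :> R by rewrite expr2; nra.
  set L := ln KR / ln 2 in L1 *.
  nra.
have hb := @bad_bound R K m p hp s hs1.
rewrite lerBlDr -lerBlDl.
apply: (le_trans hb).
have h3 : expR (- (s / 12)) <= (KR ^+ 3)^-1.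
  rewrite -(lnK (x := KR)); last by rewrite posrE; lra.
  rewrite -expRM_natl -expRN ler_expR; lra.
apply: (le_trans (y := (K * K * N * N * N)%N%:R / KR ^+ 3)).
  by rewrite ler_wpM2l.
have KR3 : 0 < KR ^+ 3 by apply: exprn_gt0; lra.
rewrite ler_pdivrMr // mulrC ler_pdivlMr ?ltr0n //.
rewrite /KR -natrM -natrX ler_nat b4.
have -> : ((K * (N * N)) ^ 3 = (K * K * N * N * N * N) * (K * N * N))%N by ring.
by rewrite leq_pmulr // !muln_gt0 hK hN.
Qed.

Local Open Scope classical_set_scope.

Theorem lemma3p2 (R : realType) (k : nat -> nat) (p : nat -> R)
  (hk : forall m, (0 < k m)%N)
  (hp : forall m, 0 <= p m <= 1) :
  [sequence @Gnpk_prob R (k m) m (p m)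
     (fun E => @almost_complete R (k m) m E (s_bound (k m) m (p m)))]_m @ \oo --> (1 : R).
Proof.
apply: (@squeeze_cvgr _ _ _ _ (fun m => 1 - (2^-1 : R) ^+ m) (fun _ => 1)).
- apply: nearW => m /=.
  have := @key_bound R (k m) m (p m) (hk m) (hp m).
  by rewrite natrX -exprVn.
- rewrite -[X in _ --> X]subr0; apply: cvgB; first exact: cvg_cst.
  apply: cvg_expr; rewrite ger0_norm ?invr_ge0 //.
  by rewrite invf_lt1 // ltr1n.
- exact: cvg_cst.
Qed.
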